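(* Let $A$ be an infinite alphabet and let $\tilde f:A^2\to\{0,1\}$ satisfy: (i) for each $x\in A$ there is $y\in A$ with $\tilde f(x,y)=1$; (ii) the set $\{x\in A: \tilde f(x,y)=1$ for infinitely many $y\in A\}$ is finite and non-empty. Let $f$ be the $1$-step shift map induced by $\tilde f$. Then the $1$-step shift space $X_f$ contains only finitely many elements of length $1$ (namely those $x\in A$ with $\tilde f(x,y)=1$ for infinitely many $y$), and $X_f$ is not conjugate to any $0$-step shift space (i.e. to any full shift $\Sigma_B$). In particular this applies to $\tilde f$ defined, for a fixed $x_0\in A$, by $\tilde f(x,y)=1$ if $x=x_0$, $\tilde f(x,y)=1$ if $x\ne x_0$ and $y=x$, and $\tilde f(x,y)=0$ otherwise.
   Context: For an alphabet $A$, $\Sigma_A$ is the set of infinite sequences over $A$ together with, when $A$ is infinite, all finite sequences (including the empty sequence $\emptyset$); for finite $A$ it is just the infinite sequences. The topology is generated by the generalized cylinders $Z(x,F)=\{y: y_i=x_i\ (1\le i\le k),\ y_{k+1}\notin F\}$ ($x=(x_1,\dots,x_k)\ne\emptyset$, $F\subseteq A$ finite) and $Z(\emptyset,F)=\{y: y_1\notin F\}$; $l(x)$ denotes length ($\infty$ for infinite sequences); $\sigma$ deletes the first letter. A subblock of $x$ is a finite word $u$ with $x=vuz$. For $f:\bigcup_{k\ge1}A^k\to\{0,1\}$: $X_f^{inf}=\{x\in A^{\mathbb N}: f(u)=1$ for all nonempty subblocks $u$ of $x\}$, $X_f^{fin}=\{x$ finite: there are infinitely many $a\in A$ with $xay\in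 X_f^{inf}$ for some infinite $y\}$, $X_f=X_f^{inf}\cup X_f^{fin}$. For $N\ge0$ and $\tilde f:A^{N+1}\to\{0,1\}$ the $N$-step shift map induced by $\tilde f$ is $f(x)=1$ if $|x|\le N$ and $f(x)=\prod_{i=1}^{|x|-N}\tilde f(x_i,\dots,x_{N+i})$ if $|x|\ge N+1$; $N$-step shift spaces are the sets $X_g$ for such induced maps $g$ (over some alphabet $B$). A conjugacy is a continuous, shift-commuting bijection between shift spaces preserving length $l$. *)

(* Defs.v *)
From Stdlib Require Import List Arith.
Import ListNotations.
Set Implicit Arguments.

(* Elements of Sigma_A: finite words (including the empty sequence) or
   infinite sequences (0-indexed: position i of the paper is index i-1). *)
Inductive seqA (A : Type) : Type :=
| Fin : list A -> seqA A
| Inf : (nat -> A) -> seqA A.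
Arguments Fin {A} _.
Arguments Inf {A} _.

Definition len {A} (x : seqA A) : option nat :=
  match x with Fin l => Some (length l) | Inf _ => None end.

Definition letter {A} (x : seqA A) (i : nat) : option A :=
  match x with Fin l => nth_error l i | Inf s => Some (s i) end.

Definition shift {A} (x : seqA A) : seqA A :=
  match x with Fin l => Fin (tl l) | Inf s => Inf (fun n => s (S n)) end.

Definition prepend {A} (w : list A) (s : nat -> A) : nat -> A :=
  fun n => if n <? length w then nth n w (s 0) else s (n - length w).

(* generalized cylinder Z(x,F): x finite word (possibly empty), F finite set *)
Definition cyl (A : Type) : Type := (list A * list A)%type.

(* y in Z(x,F): y begins with x, and it is not the case that y has a
   (l(x)+1)-th letter lying in F. (So x itself belongs to Z(x,F).) *)
Definition in_cyl {A} (c : cyl A) (y : seqA A) : Prop :=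
  let (x, F) := c in
  (forall i, i < length x -> letter y i = nth_error x i) /\
  ~ (exists a, letter y (length x) = Some a /\ In a F).

(* open sets of the topology generated by the generalized cylinders:
   unions of finite intersections of cylinders *)
Definition is_open {A} (O : seqA A -> Prop) : Prop :=
  forall y, O y -> exists Ls : list (cyl A),
    (forall c, In c Ls -> in_cyl c y) /\
    (forall z, (forall c, In c Ls -> in_cyl c z) -> O z).

Definition rel_open {A} (X U : seqA A -> Prop) : Prop :=
  exists O, is_open O /\ forall x, X x -> (U x <-> O x).

Definition continuous_on {A B} (X : seqA A -> Prop) (Y : seqA B -> Prop)
  (phi : seqA A -> seqA B) : Prop :=
  forall U, rel_open Y U -> rel_open X (fun x => U (phi x)).

Definition conjugate {A B} (X : seqA A -> Prop) (Y : seqA B -> Prop) : Prop :=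
  exists phi : seqA A -> seqA B,
    (forall x, X x -> Y (phi x)) /\
    (forall x x', X x -> X x' -> phi x = phi x' -> x = x') /\
    (forall y, Y y -> exists x, X x /\ phi x = y) /\
    continuous_on X Y phi /\
    (forall x, X x -> phi (shift x) = shift (phi x)) /\
    (forall x, X x -> len (phi x) = len x).

(* N-step shift map induced by ft : A^{N+1} -> {0,1}; ft is given on lists and
   only its values on lists of length N+1 are used. *)
Definition induced {A} (N : nat) (ft : list A -> bool) (w : list A) : bool :=
  if length w <=? N then true
  else forallb (fun i => ft (firstn (S N) (skipn i w))) (seq 0 (length w - N)).

Definition subblock {A} (s : nat -> A) (i n : nat) : list A :=
  map (fun j => s (i + j)) (seq 0 n).

Definition Xinf {A} (f : list A -> bool) (s : nat -> A) : Prop :=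
  forall i n, 0 < n -> f (subblock s i n) = true.

Definition infinitely_many {A} (P : A -> Prop) : Prop :=
  forall l : list A, exists a, ~ In a l /\ P a.

Definition Xfin {A} (f : list A -> bool) (x : list A) : Prop :=
  infinitely_many (fun a => exists y : nat -> A, Xinf f (prepend (x ++ [a]) y)).

Definition Xf {A} (f : list A -> bool) (x : seqA A) : Prop :=
  match x with Fin l => Xfin f l | Inf s => Xinf f s end.

Definition ft2 {A} (ft : A -> A -> bool) (w : list A) : bool :=
  match w with [a; b] => ft a b | _ => false end.
Definition ft1 {A} (g : A -> bool) (w : list A) : bool :=
  match w with [a] => g a | _ => false end.

Definition infinite_type (A : Type) : Prop :=
  forall l : list A, exists a, ~ In a l.

Definition conclusion {A} (ft : A -> A -> bool) : Prop :=
  let X := Xf (induced 1 (ft2 ft)) in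
  (forall a, X (Fin [a]) <-> infinitely_many (fun y => ft a y = true)) /\
  (exists l : list (seqA A), forall w, X w -> len w = Some 1 -> In w l) /\
  (forall (B : Type) (g : B -> bool), ~ conjugate X (Xf (induced 0 (ft1 g)))).

(* Main.v *)
Require Import Defs.
From Stdlib Require Import List Arith Lia IndefiniteDescription Classical.
Import ListNotations.

Lemma sub_S {A} (s : nat -> A) i n : subblock s i (S n) = s i :: subblock s (S i) n.
Proof.
  unfold subblock. simpl. rewrite <- seq_shift, map_map. rewrite Nat.add_0_r. f_equal.
  apply map_ext. intros. f_equal. lia.
Qed.

Lemma skip_sub {A} (s : nat -> A) k i n : skipn k (subblock s i n) = subblock s (i+k) (n-k).
Proof.
  revert i n; induction k; intros i n.
  - simpl. rewrite Nat.add_0_r, Nat.sub_0_r. reflexivity.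
  - destruct n.
    + unfold subblock. simpl. destruct k; reflexivity.
    + rewrite sub_S. simpl. rewrite IHk. f_equal. lia.
Qed.

Lemma first_sub {A} (s : nat -> A) m i n : firstn m (subblock s i n) = subblock s i (min m n).
Proof.
  revert i n; induction m; intros i n.
  - reflexivity.
  - destruct n.
    + reflexivity.
    + rewrite !sub_S. simpl. rewrite sub_S, IHm. reflexivity.
Qed.

Lemma len_sub {A} (s : nat -> A) i n : length (subblock s i n) = n.
Proof. unfold subblock. rewrite length_map, length_seq. reflexivity. Qed.

Lemma Xinf1_of {A} (ft : A -> A -> bool) s :
  (forall i, ft (s i) (s (S i)) = true) -> Xinf (induced 1 (ft2 ft)) s.
Proof.
  intros H i n _. unfold induced. rewrite len_sub.
  destruct (n <=? 1) eqn:E; [reflexivity|].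
  apply Nat.leb_gt in E.
  apply forallb_forall. intros k Hk. apply in_seq in Hk.
  rewrite skip_sub, first_sub.
  replace (Nat.min 2 (n - k)) with 2 by lia.
  simpl. rewrite Nat.add_0_r, Nat.add_1_r. apply H.
Qed.

Lemma Xinf1_to {A} (ft : A -> A -> bool) s :
  Xinf (induced 1 (ft2 ft)) s -> forall i, ft (s i) (s (S i)) = true.
Proof.
  intros H i. specialize (H i 2 ltac:(lia)). cbn in H.
  rewrite Nat.add_0_r, Nat.add_1_r in H. destruct (ft _ _); auto.
Qed.

Lemma Xinf0_of {B} (g : B -> bool) s :
  (forall i, g (s i) = true) -> Xinf (induced 0 (ft1 g)) s.
Proof.
  intros H i n _. unfold induced. rewrite len_sub.
  destruct (n <=? 0) eqn:E; [reflexivity|].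
  apply forallb_forall. intros k Hk. apply in_seq in Hk.
  rewrite skip_sub, first_sub.
  replace (Nat.min 1 (n - k)) with 1 by lia.
  simpl. apply H.
Qed.

Lemma Xinf0_to {B} (g : B -> bool) s :
  Xinf (induced 0 (ft1 g)) s -> forall i, g (s i) = true.
Proof.
  intros H i. specialize (H i 1 ltac:(lia)). cbn in H.
  rewrite Nat.add_0_r in H. destruct (g _); auto.
Qed.

Lemma Y1_inf {B} (g : B -> bool) b :
  Xf (induced 0 (ft1 g)) (Fin [b]) -> infinitely_many (fun a => g a = true).
Proof.
  simpl. intros H l. destruct (H l) as [a [Ha [y Hy]]]. exists a. split; auto.
  exact (Xinf0_to _ _ Hy 1).
Qed.

Lemma Y1_of {B} (g : B -> bool) c :
  infinitely_many (fun a => g a = true) -> g c = true -> Xf (induced 0 (ft1 g)) (Fin [c]).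
Proof.
  simpl. intros H Hc l. destruct (H l) as [a [Ha Ga]]. exists a. split; auto.
  exists (fun _ => c). apply Xinf0_of. intros [|[|i]]; simpl; auto.
Qed.

Lemma part1 {A} (ft : A -> A -> bool) :
  (forall x, exists y, ft x y = true) ->
  forall a, Xf (induced 1 (ft2 ft)) (Fin [a]) <-> infinitely_many (fun y => ft a y = true).
Proof.
  intros Hi a. simpl. split.
  - intros H l. destruct (H l) as [b [Hb [y Hy]]]. exists b. split; auto.
    exact (Xinf1_to _ _ Hy 0).
  - intros H l. destruct (H l) as [b [Hb Fb]]. exists b. split; auto.
    set (h := fun x => proj1_sig (constructive_indefinite_description _ (Hi x))).
    assert (Hh : forall x, ft x (h x) = true)
      by (intro x; exact (proj2_sig (constructive_indefinite_description _ (Hi x)))).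
    exists (fun n => Nat.iter (S n) h b). apply Xinf1_of.
    intros [|[|i]]; simpl; auto.
    try rewrite Nat.sub_0_r; destruct i; simpl; apply Hh.
Qed.

Lemma general {A} (ft : A -> A -> bool) :
  (forall x, exists y, ft x y = true) ->
  (exists l : list A, forall x, infinitely_many (fun y => ft x y = true) -> In x l) ->
  (exists x, infinitely_many (fun y => ft x y = true)) ->
  conclusion ft.
Proof.
  intros Hi [l Hl] [x0 Hx0]. unfold conclusion.
  set (lX := map (fun a => Fin [a]) l).
  assert (HX : forall w, Xf (induced 1 (ft2 ft)) w -> len w = Some 1 -> In w lX).
  { intros [w|s] Hw Hlen; [|discriminate].
    destruct w as [|a [|? ?]]; try discriminate.
    apply (in_map (fun a => Fin [a])). apply Hl. apply (part1 _ Hi). exact Hw. }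
  split; [exact (part1 _ Hi)|]. split; [exists lX; exact HX|].
  intros B g [phi [Hmap [Hinj [Hsurj [_ [_ Hlen]]]]]].
  assert (X0 : Xf (induced 1 (ft2 ft)) (Fin [x0])) by (apply (part1 _ Hi); exact Hx0).
  pose proof (Hmap _ X0) as Y0. pose proof (Hlen _ X0) as L0.
  destruct (phi (Fin [x0])) as [w|s] eqn:E; [|discriminate].
  destruct w as [|b [|? ?]]; try discriminate.
  pose proof (Y1_inf _ _ Y0) as Ginf.
  set (L := flat_map (fun w => match w with Fin [b] => [b] | _ => [] end) (map phi lX)).
  destruct (Ginf L) as [c [Hc Gc]].
  destruct (Hsurj _ (Y1_of _ _ Ginf Gc)) as [x' [Hx' Ex']].
  assert (In x' lX) as Hin.
  { apply HX; auto. rewrite <- Hlen by auto. rewrite Ex'. reflexivity. }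
  apply Hc. unfold L. apply in_flat_map. exists (Fin [c]). split.
  - rewrite <- Ex'. apply in_map. exact Hin.
  - simpl. auto.
Qed.

Theorem mainTheorem4 (A : Type) (HA : infinite_type A) :
  (forall ft : A -> A -> bool,
      (forall x, exists y, ft x y = true) ->
      (exists l : list A, forall x,
          infinitely_many (fun y => ft x y = true) -> In x l) ->
      (exists x, infinitely_many (fun y => ft x y = true)) ->
      conclusion ft) /\
  (forall (x0 : A) (ft : A -> A -> bool),
      (forall x y, ft x y = true <-> (x = x0 \/ (x <> x0 /\ y = x))) ->
      conclusion ft).
Proof.
  split.
  - intros ft. apply general.
  - intros x0 ft Hft. apply general.
    + intro x. exists x. apply Hft. destruct (classic (x = x0)); auto.
    + exists [x0]. intros x Hx. destruct (classic (x = x0)) as [->|Hne]; [left; auto|].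
      exfalso. destruct (Hx [x]) as [a [Ha Fa]]. apply Hft in Fa.
      destruct Fa as [->|[_ ->]]; [congruence|]. apply Ha; left; auto.
    + exists x0. intro l. destruct (HA l) as [a Ha]. exists a. split; auto.
      apply Hft. auto.
Qed.
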